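(* Let $n\ge1$ and let $f$ be a function from the set of Schubert problems for $GL_n$ (triples $(u,v,w)\in S_n^3$ with $l(u)+l(v)+l(w)=\binom n2$) to $\mathbb Z$ satisfying: (1) (descent-cycling invariance) for every triple $(u,v,w)\in S_n^3$ with $l(u)+l(v)+l(w)=\binom n2-1$ and every $i\in\{1,\dots,n-1\}$ with $u(i)<u(i+1)$, $v(i)<v(i+1)$, $w(i)<w(i+1)$, one has $f(us_i,v,w)=f(u,vs_i,w)=f(u,v,ws_i)$; (2) $f(u,v,w)=0$ whenever there is $i$ with $u(i)<u(i+1)$, $v(i)<v(i+1)$ and $w(i)<w(i+1)$; (3) $f(\mathrm{id},\mathrm{id},w_0)=1$. Let $\pi,\sigma\in S_n$ with $l(\pi)+l(\sigma)=\binom n2$. Then $f(\pi,\mathrm{id},\sigma)=1$ if $\pi(m)=n+1-\sigma(m)$ for all $m$ (i.e. $\pi=w_0\sigma$), and $f(\pi,\mathrm{id},\sigma)=0$ otherwise.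
   Context: Permutations are in one-line notation; $l$ is the number of inversions; $w_0=n\,n{-}1\cdots1$ is the longest permutation; $\mathrm{id}$ is the identity; $us_i$ denotes $u$ with the entries in positions $i$ and $i+1$ swapped. *)

(* Defs.v *)
(* Permutations of {1..n} are 'S_n = {perm 'I_n}
   (positions/values shifted to 0..n-1). *)
From mathcomp Require Import all_boot all_order all_algebra all_fingroup.
Set Implicit Arguments. Unset Strict Implicit. Unset Printing Implicit Defensive.

Definition plength n (u : 'S_n) : nat :=
  #|[set p : 'I_n * 'I_n | (p.1 < p.2) && (u p.2 < u p.1)]|.

(* u s_i : u with the entries in positions i and j (= i+1) swapped,
   i.e. the function x |-> u (tperm i j x). In mathcomp (s * t) x = t (s x). *)
Definition swap_pos n (u : 'S_n) (i j : 'I_n) : 'S_n := (tperm i j * u)%g.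

Definition asc n (u : 'S_n) (i j : 'I_n) : bool := u i < u j.

Definition schubert_problem n (u v w : 'S_n) : Prop :=
  plength u + plength v + plength w = 'C(n, 2).

Definition w0 n : 'S_n := perm (@rev_ord_inj n).

(* Main.v *)
Require Import Defs.
From mathcomp Require Import all_boot all_order all_algebra all_fingroup.
From mathcomp Require Import zify.
Set Implicit Arguments. Unset Strict Implicit.

Lemma count_pairs n : #|[set p : 'I_n * 'I_n | p.1 < p.2]| = 'C(n, 2).
Proof.
rewrite -sum1dep_card -bin2_sum.
rewrite (eq_bigl (fun p : 'I_n * 'I_n => predT p.1 && predT p.2) ) //.
Abort.
Lemma count_pairs n : #|[set p : 'I_n * 'I_n | p.1 < p.2]| = 'C(n, 2).
Proof.
rewrite -sum1dep_card -bin2_sum big_mkcond /=.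
rewrite -(pair_big predT predT (fun (a b : 'I_n) => if a < b then 1 else 0)) /=.
rewrite exchange_big /= big_mkord; apply: eq_bigr => b _.
rewrite -big_mkcond /= -(big_mkord (fun a => a < b) (fun _ => 1)).
rewrite (big_cat_nat _ (n := b)) //=; last by apply: ltnW.
rewrite [X in _ + X]big_nat_cond [X in _ + X]big1; last by move=> k /andP[/andP[H _]]; rewrite ltnNge H.
rewrite addn0 sum1_count /= (eq_in_count (a2 := predT)) ?count_predT ?size_iota ?subn0 // => k; by rewrite mem_iota add0n subn0 => /andP[_ ->].
Qed.

Lemma ord_swap_lt n (i j a b : 'I_n) : val j = (val i).+1 ->
  (a, b) != (i, j) -> (a, b) != (j, i) ->
  (a < b) = (tperm i j a < tperm i j b).
Proof.
move=> hij h1 h2; rewrite !permE /=.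
have E : forall x y : 'I_n, (x == y) = (val x == val y) by [].
move: h1 h2; rewrite !xpair_eqE !E.
case: (a =P i :> nat) => ha; case: (a =P j :> nat) => ha';
case: (b =P i :> nat) => hb; case: (b =P j :> nat) => hb' /= h1 h2;
apply/idP/idP; try done; move: ha ha' hb hb' hij; rewrite /=; lia.
Qed.

Lemma swap_posE n (u : 'S_n) i j x : swap_pos u i j x = u (tperm i j x).
Proof. by rewrite /swap_pos permM. Qed.

Lemma swap_posK n (u : 'S_n) i j : swap_pos (swap_pos u i j) i j = u.
Proof. by rewrite /swap_pos mulgA tperm2 mul1g. Qed.

Lemma plength_swap n (u : 'S_n) (i j : 'I_n) : val j = (val i).+1 -> u i < u j ->
  plength (swap_pos u i j) = (plength u).+1.
Proof.
move=> hij hu.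
set s := tperm i j.
pose g := fun p : 'I_n * 'I_n => (s p.1, s p.2).
have ginj : injective g.
  by case=> a b [c d] [] /perm_inj -> /perm_inj ->.
have key : [set p : 'I_n * 'I_n | (p.1 < p.2) && (swap_pos u i j p.2 < swap_pos u i j p.1)]
   = (i, j) |: g @^-1: [set p : 'I_n * 'I_n | (p.1 < p.2) && (u p.2 < u p.1)].
  apply/setP => -[a b]; rewrite !inE /= !swap_posE /=.
  have [e1|n1] := eqVneq (a, b) (i, j).
    case: e1 => -> ->; by rewrite /s tpermL tpermR hu /= andbT hij ltnSn.
  have [e2|n2] := eqVneq (a, b) (j, i).
    case: e2 => -> ->; rewrite /s tpermL tpermR /=.
    have -> : (u j < u i) = false by move: hu; lia.
    by rewrite !andbF.
  by rewrite /= /s -(ord_swap_lt hij n1 n2).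
rewrite /plength key cardsU1 card_preimset // !inE /= /s tpermL tpermR.
by rewrite hij ltnNge leqnSn.
Qed.

Lemma mono_id n (p : 'S_n) : (forall i j : 'I_n, i < j -> p i < p j) -> p = 1%g.
Proof.
move=> hm; apply/permP => i; rewrite perm1.
suff main : forall k (x : 'I_n), val x = k -> p x = x by apply: main (erefl _).
elim/ltn_ind => k IH {}i hk.
have low : forall x : 'I_n, x < k -> p x = x by move=> x hx; apply: (IH x) => //.
have ge : i <= p i.
  rewrite leqNgt; apply/negP => lt.
  have := low (p i); rewrite -hk lt => /(_ isT) /perm_inj e.
  by move: lt; rewrite e ltnn.
pose m := (p^-1)%g i.
have pm : p m = i by rewrite /m permKV.
have [lt|gt|eq] := ltngtP m i.
- by move: pm; rewrite low -?hk // => e; move: lt; rewrite e ltnn.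
- have := hm _ _ gt; rewrite pm => h.
  by move: (leq_trans h ge); rewrite ltnn.
- have -> : i = m by apply: val_inj; rewrite /= eq.
  by rewrite pm; apply: val_inj.
Qed.

Theorem lemma4 (n : nat) (hn : 0 < n) (f : 'S_n -> 'S_n -> 'S_n -> int)
  (h1 : forall (u v w : 'S_n) (i j : 'I_n),
      (plength u + plength v + plength w).+1 = 'C(n, 2) ->
      val j = (val i).+1 ->
      asc u i j -> asc v i j -> asc w i j ->
      f (swap_pos u i j) v w = f u (swap_pos v i j) w /\
      f u (swap_pos v i j) w = f u v (swap_pos w i j))
  (h2 : forall (u v w : 'S_n) (i j : 'I_n),
      schubert_problem u v w ->
      val j = (val i).+1 ->
      asc u i j -> asc v i j -> asc w i j ->
      f u v w = 0%R)
  (h3 : f 1%g 1%g (w0 n) = 1%R)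
  (pi sigma : 'S_n)
  (hps : plength pi + plength sigma = 'C(n, 2)) :
  ((forall m : 'I_n, pi m = rev_ord (sigma m)) -> f pi 1%g sigma = 1%R) /\
  (~ (forall m : 'I_n, pi m = rev_ord (sigma m)) -> f pi 1%g sigma = 0%R).
Proof.
have pl1 : plength (1%g : 'S_n) = 0.
  apply/eqP; rewrite cards_eq0; apply/eqP/setP => -[a b]; rewrite !inE /= !perm1.
  by apply/negbTE; rewrite negb_and -leqNgt orbC -implybE; apply/implyP => /ltnW.
have asc1 : forall i j : 'I_n, val j = (val i).+1 -> asc 1%g i j.
  by move=> i j hij; rewrite /asc !perm1 hij ltnSn.
suff main : forall k (pi sigma : 'S_n), plength pi < k ->
    plength pi + plength sigma = 'C(n, 2) ->
  ((forall m : 'I_n, pi m = rev_ord (sigma m)) -> f pi 1%g sigma = 1%R) /\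
  (~ (forall m : 'I_n, pi m = rev_ord (sigma m)) -> f pi 1%g sigma = 0%R).
  by apply: main (ltnSn _) hps.
elim => [//|k IH] {}pi {}sigma hk {}hps.
case: (boolP [exists i : 'I_n, exists j : 'I_n,
   [&& val j == (val i).+1, pi j < pi i & sigma i < sigma j]])
   => [/existsP[i /existsP[j /and3P[/eqP hij d1 a2]]] | nA].
  set u := swap_pos pi i j.
  have au : u i < u j by rewrite /u !swap_posE tpermL tpermR.
  have hpl : plength pi = (plength u).+1.
    by have := plength_swap hij au; rewrite /u swap_posK => ->.
  have hps' := plength_swap hij a2.
  have [e1 e2] := h1 u 1%g sigma i j ltac:(by rewrite pl1 addn0 -addSn -hpl) hij au (asc1 i j hij) a2.
  have eqf : f pi 1%g sigma = f u 1%g (swap_pos sigma i j) by rewrite -e2 -e1 /u swap_posK.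
  have := IH u (swap_pos sigma i j) ltac:(by rewrite -ltnS -hpl) ltac:(by rewrite hps' addnS -addSn -hpl).
  have ceq : (forall m : 'I_n, pi m = rev_ord (sigma m)) <->
             (forall m : 'I_n, u m = rev_ord (swap_pos sigma i j m)).
    split => hc m; first by rewrite /u !swap_posE; apply: hc.
    by have := hc (tperm i j m); rewrite /u !swap_posE tpermK.
  rewrite eqf; case=> c1 c2; split => hc; [apply: c1 | apply: c2]; by [apply/ceq | move=> /ceq].
case: (boolP [exists i : 'I_n, exists j : 'I_n,
   [&& val j == (val i).+1, pi i < pi j & sigma i < sigma j]])
   => [/existsP[i /existsP[j /and3P[/eqP hij a1 a2]]] | nB].
  have z := h2 pi 1%g sigma i j ltac:(by rewrite /schubert_problem pl1 addn0) hij a1 (asc1 i j hij) a2.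
  split => // hc; exfalso.
  move: a1; rewrite (hc i) (hc j) /= => a1.
  have := ltn_ord (sigma j); move: a1 a2; lia.
have desc : forall i j : 'I_n, val j = (val i).+1 -> sigma j < sigma i.
  move=> i j hij.
  move/existsPn: nA => /(_ i) /existsPn /(_ j); rewrite hij eqxx /= => nA.
  move/existsPn: nB => /(_ i) /existsPn /(_ j); rewrite hij eqxx /= => nB.
  have nij : i != j by apply/eqP => e; move: hij; rewrite e; lia.
  have n1 : (pi i : nat) != pi j by apply/eqP => /val_inj /perm_inj e; move: nij; rewrite e eqxx.
  have n2 : (sigma i : nat) != sigma j by apply/eqP => /val_inj /perm_inj e; move: nij; rewrite e eqxx.
  move: nA nB n1 n2; lia.
have gdesc : forall d (a b : 'I_n), val b = a + d.+1 -> sigma b < sigma a.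
  elim => [|d IHd] a b hb; first by apply: desc; rewrite hb addn1.
  have hc : a + d.+1 < n by have := ltn_ord b; move: hb => /= hb; lia.
  pose c := Ordinal hc.
  apply: (@ltn_trans (sigma c)); first by apply: desc => /=; move: hb => /= hb; lia.
  exact: IHd.
have plsig : plength sigma = 'C(n, 2).
  rewrite /plength -count_pairs; apply: eq_card => -[a b]; rewrite !inE /=.
  by apply/andb_idr => hab; apply: (gdesc (b - a.+1)); rewrite /=; lia.
have pl0 : plength pi = 0 by move: hps; rewrite plsig; lia.
have pi1 : pi = 1%g.
  apply: mono_id => a b hab.
  move/eqP: pl0; rewrite cards_eq0 => /eqP/setP/(_ (a, b)); rewrite !inE /= hab /= => /negbT.
  have n1 : (pi a : nat) != pi b by apply/eqP => /val_inj /perm_inj e; move: hab; rewrite e ltnn.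
  move: n1; lia.
have sw : sigma = w0 n.
  have e : (sigma * w0 n)%g = 1%g.
    apply: mono_id => a b hab; rewrite !permM /w0 !permE /=.
    have := gdesc (b - a.+1) a b ltac:(rewrite /=; lia).
    have := ltn_ord (sigma a); have := ltn_ord (sigma b); lia.
  apply/permP => x; have := congr1 (fun p : 'S_n => p x) e.
  rewrite /= permM perm1 /w0 !permE => /(congr1 val) /= h.
  apply: val_inj => /=; have := ltn_ord (sigma x); move: h; lia.
subst; split => // hc; exfalso; apply: hc => m.
by rewrite perm1 /w0 permE rev_ordK.
Qed.
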